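(* If $\mathbf{X}\in\{0,1\}^{m\times n}$ is totally balanced, then $\mathcal{S}^Q(\mathbf{X})$ is totally balanced for every nonempty $Q\subseteq\mathrm{supp}(\mathbf{X})$.
   Context: $\mathrm{supp}(\mathbf{X})=\{(i,j):x_{i,j}=1\}$. For $t\ge 3$, a $t\times t$ cycle matrix is a binary matrix which, after permuting rows and columns, equals the matrix $\mathbf{C}_t$ whose $1$s are exactly at $(i,i),(i,i+1)$ for $i\in[t-1]$ and at $(t,1),(t,t)$. A binary matrix is totally balanced if it has no submatrix (obtained by deleting rows and columns) that is a $t\times t$ cycle matrix for any $t\ge 3$. Stretching: for a nonempty $Q=\{(\ell_1,k_1),\dots,(\ell_q,k_q)\}\subseteq\mathrm{supp}(\mathbf{X})$ listed in lexicographic order (by row index, then column index), $\mathcal{S}^Q(\mathbf{X})$ is the $(m+q)\times(n+q)$ binary matrix whose top-left $m\times n$ block is $\mathbf{X}$, whose entries at $(\ell_t,n+t)$, $(m+t,k_t)$ and $(m+t,n+t)$ equal $1$ for each $t\in[q]$, and all of whose other entries are $0$. *)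

(* Defs.v *)
From mathcomp Require Import all_boot all_order all_algebra all_fingroup.
Set Implicit Arguments. Unset Strict Implicit. Unset Printing Implicit Defensive.

(* Binary matrices are represented as 'M[bool]_(m, n); entry true = 1. *)

Definition supp m n (X : 'M[bool]_(m, n)) : {set 'I_m * 'I_n} :=
  [set p | X p.1 p.2].

Definition cycleC (t : nat) : 'M[bool]_t :=
  \matrix_(i < t, j < t)
    [|| (i : nat) == j, ((i : nat).+1 < t) && ((j : nat) == i.+1)
      | ((i : nat).+1 == t) && ((j : nat) == 0)].

Definition is_cycle_matrix t (Y : 'M[bool]_t) : Prop :=
  exists (s r : {perm 'I_t}), row_perm s (col_perm r Y) = cycleC t.

(* Submatrix obtained by deleting rows/columns: keep strictly increasing
   row indices f and column indices g. *)
Definition submx_of m n p q (X : 'M[bool]_(m, n)) (Y : 'M[bool]_(p, q)) : Prop :=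
  exists (f : 'I_p -> 'I_m) (g : 'I_q -> 'I_n),
    {mono f : i j / (i < j)%N} /\ {mono g : i j / (i < j)%N} /\
    forall i j, Y i j = X (f i) (g j).

Definition totally_balanced m n (X : 'M[bool]_(m, n)) : Prop :=
  forall t (Y : 'M[bool]_t), 3 <= t -> submx_of X Y -> ~ is_cycle_matrix Y.

Definition lexle m n (a b : 'I_m * 'I_n) : bool :=
  ((a.1 : nat) < b.1) || (((a.1 : nat) == b.1) && ((a.2 : nat) <= b.2)).

Definition lexlist m n (Q : {set 'I_m * 'I_n}) : seq ('I_m * 'I_n) :=
  sort (@lexle m n) (enum Q).

(* Stretching S^Q(X), an (m+q) x (n+q) matrix with q = #|Q|.
   Using 0-indexing: the t-th element (l_t,k_t) (t < q) gives ones at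
   (l_t, n+t), (m+t, k_t), (m+t, n+t). *)
Definition stretch m n (X : 'M[bool]_(m, n)) (Q : {set 'I_m * 'I_n})
  : 'M[bool]_(m + #|Q|, n + #|Q|) :=
  let L := map (fun p : 'I_m * 'I_n => ((p.1 : nat), (p.2 : nat))) (lexlist Q) in
  \matrix_(i, j)
    match split i, split j with
    | inl i', inl j' => X i' j'
    | inl i', inr t  => (nth (0, 0) L t).1 == i'
    | inr t, inl j'  => (nth (0, 0) L t).2 == j'
    | inr t, inr t'  => t == t'
    end.

(* Main.v *)
Require Import Defs.
From mathcomp Require Import all_boot all_order all_algebra all_fingroup.
From mathcomp Require Import zify.

Set Implicit Arguments. Unset Strict Implicit. Unset Printing Implicit Defensive.

Lemma cyc_spec t (i j : 'I_t) : cycleC t i j ->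
  (j:nat) = i \/ ((i:nat).+1 < t /\ (j:nat) = i.+1) \/ ((i:nat).+1 = t /\ (j:nat) = 0).
Proof.
rewrite mxE => /or3P [/eqP e|/andP [h /eqP e]|/andP [/eqP h /eqP e]]; lia.
Qed.

Lemma cyc_no22 t (i i' j j' : 'I_t) : 3 <= t -> i != i' -> j != j' ->
  cycleC t i j -> cycleC t i j' -> cycleC t i' j -> cycleC t i' j' -> False.
Proof.
move=> t3 ii jj /cyc_spec h1 /cyc_spec h2 /cyc_spec h3 /cyc_spec h4.
have hi : (i:nat) <> i' by move=> e; move/eqP: ii; apply; apply: ord_inj.
have hj : (j:nat) <> j' by move=> e; move/eqP: jj; apply; apply: ord_inj.
have := ltn_ord i; have := ltn_ord i'; have := ltn_ord j; have := ltn_ord j'.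
lia.
Qed.

Lemma cyc_row t (i : 'I_t) : 3 <= t ->
  exists j j', j != j' /\ cycleC t i j /\ cycleC t i j'.
Proof.
case: t i => [|[|[|t]]] // i _.
exists i, (inord (if i.+1 < t.+3 then i.+1 else 0)).
have hi := ltn_ord i.
rewrite !mxE eqxx /=; split; last split => //.
  apply/eqP => /(congr1 val) /=; rewrite inordK; case: ifP => // h; lia.
rewrite inordK; last by case: ifP.
case: ifP => h; apply/orP; right; apply/orP; [left|right]; apply/andP; split => //; lia.
Qed.

Lemma cyc_col t (j : 'I_t) : 3 <= t ->
  exists i i', i != i' /\ cycleC t i j /\ cycleC t i' j.
Proof.
case: t j => [|[|[|t]]] // j _.
exists j, (inord (if (j:nat) == 0 then t.+2 else j.-1)).
have hj := ltn_ord j.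
rewrite !mxE eqxx /=; split; last split => //.
  apply/eqP => /(congr1 val) /=; rewrite inordK; case: ifP => /eqP h; lia.
rewrite inordK; last by case: ifP => _; lia.
case: ifP => /eqP h; apply/orP; right; apply/orP; [right|left]; apply/andP; split; apply/eqP; lia.
Qed.

Section S.
Variables (m n : nat) (X : 'M[bool]_(m, n)) (Q : {set 'I_m * 'I_n}).

Definition LL := map (fun p : 'I_m * 'I_n => ((p.1 : nat), (p.2 : nat))) (lexlist Q).

Lemma Lnth (tt : 'I_#|Q|) : exists p : 'I_m * 'I_n, p \in Q /\ nth (0,0) LL tt = (nat_of_ord p.1, nat_of_ord p.2).
Proof.
have sz : size (lexlist Q) = #|Q| by rewrite /lexlist size_sort cardE.
have [p0 _] : exists p0 : 'I_m * 'I_n, True.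
  have : (tt : nat) < size (lexlist Q) by rewrite sz.
  by case: (lexlist Q) => // p0 _ _; exists p0.
exists (nth p0 (lexlist Q) tt); split.
  have : nth p0 (lexlist Q) tt \in lexlist Q by rewrite mem_nth // sz.
  by rewrite /lexlist mem_sort mem_enum.
by rewrite /LL (nth_map p0) // sz.
Qed.

Lemma stretch_lo (i : 'I_(m + #|Q|)) (j : 'I_(n + #|Q|)) (i0 : 'I_m) (j0 : 'I_n) :
  nat_of_ord i = nat_of_ord i0 -> nat_of_ord j = nat_of_ord j0 -> stretch X Q i j = X i0 j0.
Proof.
move=> ei ej; have := ltn_ord i0; have := ltn_ord j0.
rewrite /stretch mxE; case: splitP => [i1 e1|k e1]; case: splitP => [j1 f1|k' f1] /= h1 h2.
- have -> : i1 = i0 by apply: ord_inj; lia.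
  have -> : j1 = j0 by apply: ord_inj; lia.
  by [].
- lia.
- lia.
- lia.
Qed.

Lemma stretch_rowhi (i : 'I_(m + #|Q|)) (j : 'I_(n + #|Q|)) (T : 'I_#|Q|) (p : 'I_m * 'I_n) :
  nat_of_ord i = m + T -> nth (0,0) LL T = (nat_of_ord p.1, nat_of_ord p.2) ->
  stretch X Q i j = (nat_of_ord j == n + T) || (nat_of_ord j == p.2).
Proof.
move=> ei ep; have := ltn_ord p.2.
rewrite /stretch mxE -/LL; case: splitP => [i1 e1|k e1].
  have := ltn_ord i1; lia.
have kT : k = T by apply: ord_inj; lia.
subst k; rewrite ep /=.
case: splitP => [j1 f1|k' f1] h.
  rewrite f1; apply/eqP/orP => [->|[/eqP|/eqP]]; [by right|have := ltn_ord j1; lia|lia].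
rewrite f1; apply/eqP/orP => [->|[/eqP e|/eqP]]; [by left; rewrite eqxx| |lia].
by apply: ord_inj; lia.
Qed.

Lemma stretch_colhi (i : 'I_(m + #|Q|)) (j : 'I_(n + #|Q|)) (T : 'I_#|Q|) (p : 'I_m * 'I_n) :
  nat_of_ord j = n + T -> nth (0,0) LL T = (nat_of_ord p.1, nat_of_ord p.2) ->
  stretch X Q i j = (nat_of_ord i == m + T) || (nat_of_ord i == p.1).
Proof.
move=> ej ep; have := ltn_ord p.1.
rewrite /stretch mxE -/LL; case: splitP => [i1 e1|k e1];
  case: splitP => [j1 f1|k' f1] h.
- exfalso; have := ltn_ord j1; lia.
- have kT : k' = T by apply: ord_inj; lia.
  subst k'; rewrite ep /= e1; apply/eqP/orP => [->|[/eqP|/eqP]]; [by right|have := ltn_ord i1; move=> *; exfalso; lia|move=> *; lia].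
- exfalso; have := ltn_ord j1; lia.
- have kT : k' = T by apply: ord_inj; lia.
  subst k'; rewrite e1; apply/eqP/orP => [->|[/eqP e|/eqP]]; [by left; rewrite eqxx| |move=> *; exfalso; lia].
  by apply: ord_inj; lia.
Qed.

End S.

Lemma mono_inj p q (f : 'I_p -> 'I_q) : {mono f : i j / (i < j)%N} -> injective f.
Proof.
move=> fm x y e; apply: ord_inj.
move: (fm x y) (fm y x); rewrite e ltnn => /esym/negbT h1 /esym/negbT h2.
by apply/eqP; rewrite eqn_leq (leqNgt x y) (leqNgt y x) h1 h2.
Qed.

Theorem lemma3 (m n : nat) (X : 'M[bool]_(m, n)) (Q : {set 'I_m * 'I_n}) :
  totally_balanced X ->
  Q != set0 -> Q \subset supp X ->
  totally_balanced (stretch X Q).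
Proof.
move=> tbX Qn0 QX t Y t3 [f [g [fm [gm YE]]]] [s [r Ecyc]].
have finj := mono_inj fm; have ginj := mono_inj gm.
have Ysr : forall i j, Y (s i) (r j) = cycleC t i j by move=> i j; rewrite -Ecyc !mxE.
have Yrow : forall a, exists b b', b != b' /\ Y a b /\ Y a b'.
  move=> a; have [j [j' [jj [h1 h2]]]] := cyc_row (s^-1 a)%g t3.
  exists (r j), (r j'); rewrite -{1 2}(permKV s a) !Ysr; split => //.
  by apply: contra jj => /eqP /perm_inj ->.
have Ycol : forall b, exists a a', a != a' /\ Y a b /\ Y a' b.
  move=> b; have [i [i' [ii [h1 h2]]]] := cyc_col (r^-1 b)%g t3.
  exists (s i), (s i'); rewrite -{1 2}(permKV r b) !Ysr; split => //.
  by apply: contra ii => /eqP /perm_inj ->.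
have Y22 : forall a a' b b', a != a' -> b != b' -> Y a b -> Y a b' -> Y a' b -> Y a' b' -> False.
  move=> a a' b b' aa bb.
  rewrite -(permKV s a) -(permKV s a') -(permKV r b) -(permKV r b') !Ysr.
  apply: cyc_no22 => //.
    by apply: contra aa => /eqP /(congr1 s); rewrite !permKV => ->.
  by apply: contra bb => /eqP /(congr1 r); rewrite !permKV => ->.
have rowlo : forall a, (f a : nat) < m.
  move=> a; rewrite ltnNge; apply/negP => hge.
  have [T hfa] : exists T : 'I_#|Q|, (f a : nat) = m + T.
    have := ltn_ord (f a); clear -hge => lt.
    have ttq : (f a : nat) - m < #|Q| by lia.
    by exists (Ordinal ttq); rewrite /= subnKC.
  have [p [pQ pE]] := Lnth T.
  have [b [b' [bb' [Hb Hb']]]] := Yrow a.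
  have Eb := Hb; have Eb' := Hb'.
  rewrite YE (stretch_rowhi _ _ hfa pE) in Eb.
  rewrite YE (stretch_rowhi _ _ hfa pE) in Eb'.
  have gbb : (g b : nat) <> g b'.
    by move=> e; move/eqP: bb'; apply; apply: ginj; apply: ord_inj.
  have [jc [jk [Hjc [Hjk [Yajc Yajk]]]]] : exists jc jk,
      (g jc : nat) = n + T /\ (g jk : nat) = p.2 /\ Y a jc /\ Y a jk.
    move/orP: Eb => [/eqP e1|/eqP e1]; move/orP: Eb' => [/eqP e2|/eqP e2].
    - exfalso; clear -e1 e2 gbb; lia.
    - by exists b, b'.
    - by exists b', b.
    - exfalso; clear -e1 e2 gbb; lia.
  have [i1 [i2 [ii [H1 H2]]]] := Ycol jc.
  have E1 := H1; have E2 := H2.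
  rewrite YE (stretch_colhi _ _ Hjc pE) in E1.
  rewrite YE (stretch_colhi _ _ Hjc pE) in E2.
  have fii : (f i1 : nat) <> f i2.
    by move=> e; move/eqP: ii; apply; apply: finj; apply: ord_inj.
  have [il [Hil Yil]] : exists il, (f il : nat) = p.1 /\ Y il jc.
    move/orP: E1 => [/eqP e1|/eqP e1]; move/orP: E2 => [/eqP e2|/eqP e2].
    - exfalso; clear -e1 e2 fii; lia.
    - by exists i2.
    - by exists i1.
    - exfalso; clear -e1 e2 fii; lia.
  have Yilk : Y il jk.
    rewrite YE (stretch_lo _ Hil Hjk).
    by move/subsetP: QX => /(_ _ pQ); rewrite inE.
  apply: (Y22 a il jc jk) => //.
    apply/eqP => e; rewrite e in hfa; have := ltn_ord p.1.
    by clear -hfa Hil; lia.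
  apply/eqP => e; rewrite e in Hjc; have := ltn_ord p.2.
  by clear -Hjc Hjk; lia.
have collo : forall b, (g b : nat) < n.
  move=> b; rewrite ltnNge; apply/negP => hge.
  have [T hgb] : exists T : 'I_#|Q|, (g b : nat) = n + T.
    have := ltn_ord (g b); clear -hge => lt.
    have ttq : (g b : nat) - n < #|Q| by lia.
    by exists (Ordinal ttq); rewrite /= subnKC.
  have [p [pQ pE]] := Lnth T.
  have [i1 [i2 [ii [H1 H2]]]] := Ycol b.
  rewrite YE (stretch_colhi _ _ hgb pE) in H1.
  rewrite YE (stretch_colhi _ _ hgb pE) in H2.
  have fii : (f i1 : nat) <> f i2.
    by move=> e; move/eqP: ii; apply; apply: finj; apply: ord_inj.
  have := rowlo i1; have := rowlo i2; have := ltn_ord p.1.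
  move/orP: H1 => [/eqP e1|/eqP e1]; move/orP: H2 => [/eqP e2|/eqP e2];
    clear -e1 e2 fii; lia.
pose f' := fun a => Ordinal (rowlo a).
pose g' := fun b => Ordinal (collo b).
apply: (tbX t Y t3); last by exists s, r.
exists f', g'; split; first by move=> i j; exact: fm.
split; first by move=> i j; exact: gm.
by move=> i j; rewrite YE (@stretch_lo _ _ X Q (f i) (g j) (f' i) (g' j)).
Qed.
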